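(* For a loss $\rho$ and prior $\pi$ on $\mathbb R$ such that the M-posterior has finite variance, for every $\tau\in(0,1)$, $\varepsilon^*(T_\tau,X^n)\ge\varepsilon^*_{W_2}(\pi_n^\rho,X^n)$.
   Context: Location M-posterior: for $Y=(y_1,\dots,y_n)\in\mathbb R^n$, $\pi_n^\rho(\theta\mid Y)\propto\pi(\theta)\exp(-\sum_i\rho(y_i-\theta))$; posterior left $\tau$-quantile $T_\tau(Y)=\inf\{\theta:\int_{-\infty}^\theta\pi_n^\rho(\theta'\mid Y)d\theta'\ge\tau\}$. $\mathcal B(X^n,m)$: samples differing from $X^n$ in at most $m$ entries. Posterior breakdown point $\varepsilon^*_{W_2}(\pi_n^\rho,X^n)=\min\{m/n:\sup_{Y\in\mathcal B(X^n,m)}W_2(\pi_n^\rho(\cdot\mid Y),\pi_n^\rho(\cdot\mid X^n))=\infty\}$ ($W_2$ the 2-Wasserstein distance). Finite-sample breakdown point of a statistic $T$: $\varepsilon^*(T,X^n)=\min\{m/n:\sup_{Y\in\mathcal B(X^n,m)}|T(Y)-T(X^n)|=\infty\}$. *)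

(* Defs.v *)
From HB Require Import structures.
From mathcomp Require Import all_boot all_order all_algebra.
From mathcomp Require Import all_classical all_reals all_analysis.
Set Implicit Arguments. Unset Strict Implicit. Unset Printing Implicit Defensive.
Import Order.TTheory GRing.Theory Num.Theory.
Import numFieldNormedType.Exports.
Local Open Scope classical_set_scope.
Local Open Scope ring_scope.

Definition neg_loglik (R : realType) (rho : R -> R) (n : nat) (Y : 'I_n -> R)
  (t : R) : R := \sum_(i < n) rho (Y i - t).

Definition unnorm_post (R : realType) (pi rho : R -> R) (n : nat)
  (Y : 'I_n -> R) (t : R) : R := pi t * expR (- neg_loglik rho Y t).

Definition post_norm (R : realType) (pi rho : R -> R) (n : nat)
  (Y : 'I_n -> R) : \bar R :=
  (\int[@lebesgue_measure R]_(t in [set: R]) (unnorm_post pi rho Y t)%:E)%E.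

Definition post_dens (R : realType) (pi rho : R -> R) (n : nat)
  (Y : 'I_n -> R) (t : R) : R := unnorm_post pi rho Y t / fine (post_norm pi rho Y).

Definition posterior (R : realType) (pi rho : R -> R) (n : nat)
  (Y : 'I_n -> R) : set R -> \bar R :=
  fun A => (\int[@lebesgue_measure R]_(t in A) (post_dens pi rho Y t)%:E)%E.

Definition post_quantile (R : realType) (pi rho : R -> R) (n : nat) (tau : R)
  (Y : 'I_n -> R) : R :=
  inf [set t : R | (tau%:E <= posterior pi rho Y `]-oo, t])%E].

Definition W2sq (R : realType) (mu nu : set R -> \bar R) : \bar R :=
  ereal_inf [set x : \bar R | exists g : probability (R * R)%type R,
    (forall A : set R, measurable A ->
        g (A `*` [set: R]) = mu A /\ g ([set: R] `*` A) = nu A) /\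
    x = (\int[g]_(z in [set: R * R]) ((z.1 - z.2) ^+ 2)%:E)%E].

Definition W2 (R : realType) (mu nu : set R -> \bar R) : \bar R :=
  match W2sq mu nu with
  | EFin r => (Num.sqrt r)%:E
  | x => x
  end.

Definition Bset (R : realType) (n : nat) (X : 'I_n -> R) (m : nat) :
  set ('I_n -> R) :=
  [set Y : 'I_n -> R | (#|[pred i | Y i != X i]| <= m)%N].

(* min { m/n : sup_{Y in B(X,m)} D(Y, X) = +oo }  (min of empty set = +oo) *)
Definition breakdown (R : realType) (n : nat) (X : 'I_n -> R)
  (D : ('I_n -> R) -> \bar R) : \bar R :=
  ereal_inf [set (m%:R / n%:R : R)%:E | m in
     [set m : nat | ereal_sup [set D Y | Y in Bset X m] = +oo%E]].

Definition fs_breakdown (R : realType) (n : nat) (T : ('I_n -> R) -> R)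
  (X : 'I_n -> R) : \bar R :=
  breakdown X (fun Y => (`|T Y - T X|)%:E).

Definition post_breakdown (R : realType) (pi rho : R -> R) (n : nat)
  (X : 'I_n -> R) : \bar R :=
  breakdown X (fun Y => W2 (posterior pi rho Y) (posterior pi rho X)).

(* Main.v *)
Require Import Defs.
From HB Require Import structures.
From mathcomp Require Import all_boot all_order all_algebra.
From mathcomp Require Import all_classical all_reals all_analysis.
From mathcomp Require Import measurable_realfun.
From mathcomp Require Import lra.
Import Order.TTheory GRing.Theory Num.Theory.
Import numFieldNormedType.Exports.
Local Open Scope classical_set_scope.
Local Open Scope ring_scope.

Section Aux.
Variable R : realType.

Lemma post_dens_ge0 (pi rho : R -> R) n (Y:'I_n->R) : (forall t, 0 <= pi t) ->
  (0 < post_norm pi rho Y)%E -> forall t, 0 <= post_dens pi rho Y t.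
Proof.
move=> pi0 h1 t; rewrite /post_dens /unnorm_post.
apply: divr_ge0; first by rewrite mulr_ge0 // expR_ge0.
by apply: fine_ge0; exact: ltW.
Qed.

Lemma post_dens_meas (pi rho : R -> R) n (Y:'I_n->R) : measurable_fun setT pi ->
  measurable_fun setT rho -> measurable_fun setT (post_dens pi rho Y).
Proof.
move=> mpi mrho; rewrite /post_dens /unnorm_post.
apply: measurable_funM; last exact: measurable_cst.
apply: measurable_funM => //.
apply: measurableT_comp; first exact: measurable_expR.
apply: measurableT_comp; first exact: oppr_measurable.
rewrite /neg_loglik.
apply: measurable_sum => i.
apply: measurableT_comp => //.
apply: measurable_funB; first exact: measurable_cst.
exact: measurable_id.
Qed.

Lemma tail_bound (pi rho : R -> R) n (Y:'I_n->R) (a : R) : 0 < a ->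
  measurable_fun setT pi -> measurable_fun setT rho -> (forall t, 0 <= pi t) ->
  (0 < post_norm pi rho Y)%E ->
  (\int[@lebesgue_measure R]_(t in [set: R])
         ((t ^+ 2 * post_dens pi rho Y t)%:E) < +oo)%E ->
  (posterior pi rho Y (~` `[(- a)%R, a]) <=
    ((fine (\int[@lebesgue_measure R]_(t in [set: R])
         ((t ^+ 2 * post_dens pi rho Y t)%:E))) / a ^+ 2)%R%:E)%E.
Proof.
move=> a0 mpi mrho pi0 hn hm.
set f := post_dens pi rho Y.
have f0 := @post_dens_ge0 pi rho n Y pi0 hn.
have mf : measurable_fun setT f := @post_dens_meas pi rho n Y mpi mrho.
have mg : measurable_fun setT (fun t : R => (t ^+ 2 * f t)%:E).
  apply/measurable_EFinP; apply: measurable_funM => //; exact: exprn_measurable.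
have mA : measurable (~` `[(- a)%R, a] : set R) by apply: measurableC; exact: measurable_itv.
rewrite /posterior.
have H1 : (\int[@lebesgue_measure R]_(t in ~` `[(- a)%R, a]) (f t)%:E <=
  \int[@lebesgue_measure R]_(t in ~` `[(- a)%R, a])
   (((a ^+ 2)^-1)%:E * (t ^+ 2 * f t)%:E))%E.
  apply: ge0_le_integral => //.
  - by move=> x _; rewrite lee_fin.
  - by apply/measurable_EFinP; apply: measurable_funTS.
  - apply: emeasurable_funM; first exact: measurable_cst.
    exact: measurable_funTS.
  move=> x /= hx; rewrite -EFinM lee_fin mulrA.
  apply: ler_peMl => //.
  rewrite mulrC ler_pdivlMr ?exprn_gt0 // mul1r.
  have : ~ (-a <= x <= a) by move=> h; apply: hx; rewrite /= in_itv /=.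
  move/negP; rewrite negb_and -!ltNge => /orP[] h; nra.
apply: le_trans H1 _.
rewrite ge0_integralZl //; last first.
- by rewrite lee_fin invr_ge0 exprn_ge0 // ltW.
- by move=> x _; rewrite lee_fin mulr_ge0 // sqr_ge0.
- exact: measurable_funTS.
have M0 : (0 <= \int[@lebesgue_measure R]_(t in [set: R]) ((t ^+ 2 * f t)%:E))%E.
  by apply: integral_ge0 => x _; rewrite lee_fin mulr_ge0 // sqr_ge0.
rewrite mulrC EFinM.
apply: lee_wpmul2l; first by rewrite lee_fin invr_ge0 exprn_ge0 // ltW.
rewrite fineK; last by rewrite ge0_fin_numE.
apply: ge0_subset_integral => //.
by move=> x _; rewrite lee_fin mulr_ge0 // sqr_ge0.
Qed.

Lemma probE (g : probability (R * R)%type R) E : measurable E ->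
  exists r : R, g E = r%:E /\ 0 <= r <= 1.
Proof.
move=> mE; have h0 := measure_ge0 g E; have h1 := probability_le1 g mE.
have fE : g E \is a fin_num by rewrite ge0_fin_numE // (le_lt_trans h1) // ltry.
exists (fine (g E)); rewrite fineK //; split => //.
by apply/andP; split; rewrite -lee_fin fineK.
Qed.

Lemma cover3 (g : probability (R * R)%type R) C C1 C2 C3 :
  measurable C -> measurable C1 -> measurable C2 -> measurable C3 ->
  C `<=` C1 `|` C2 `|` C3 -> (g C <= g C1 + g C2 + g C3)%E.
Proof.
move=> mC m1 m2 m3 sC.
apply: (@le_trans _ _ (g (C1 `|` C2 `|` C3))).
  have mU : measurable (C1 `|` C2 `|` C3) by apply: measurableU => //; apply: measurableU.
  by apply: le_measure => //; rewrite inE.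
apply: le_trans; first by apply: measureU2 => //; exact: measurableU.
by apply: leeD2r; exact: measureU2.
Qed.

Lemma rect_lb (g : probability (R * R)%type R) (D : set (R * R)) (k : R) :
  measurable D -> 0 <= k -> (forall z, D z -> k <= (z.1 - z.2) ^+ 2) ->
  (k%:E * g D <= \int[g]_(z in [set: R * R]) ((z.1 - z.2) ^+ 2)%:E)%E.
Proof.
move=> mD k0 hk.
have mh : measurable_fun [set: R * R] (fun z : R * R => ((z.1 - z.2) ^+ 2)%:E).
  apply/measurable_EFinP.
  apply: (measurableT_comp (f := fun x : R => x ^+ 2) (g := fun z : R * R => z.1 - z.2)).
    exact: exprn_measurable.
  by apply: measurable_funB; [exact: measurable_fst|exact: measurable_snd].
rewrite -(integral_cst g mD k%:E).
have H1 : (\int[g]_(x in D) cst k%:E x <= \int[g]_(z in D) ((z.1 - z.2) ^+ 2)%:E)%E.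
  apply: ge0_le_integral => //.
  all: try (by move=> x _; rewrite lee_fin).
  - exact: measurable_funTS.
apply: le_trans H1 _.
apply: ge0_subset_integral => //.
by move=> x _; rewrite lee_fin sqr_ge0.
Qed.

Lemma W2sq_lb (pi rho : R -> R) n (X Y : 'I_n -> R) (tau a d : R) :
  0 < d -> 2 * d <= tau -> 2 * d <= 1 - tau -> 0 < a ->
  (posterior pi rho X (~` `[(- a)%R, a]) <= d%:E)%E ->
  a < `|post_quantile pi rho tau Y| ->
  ((d * ((`|post_quantile pi rho tau Y| - a) / 2) ^+ 2)%:E <=
     W2sq (posterior pi rho Y) (posterior pi rho X))%E.
Proof.
move=> d0 dtau dtau' a0 hX.
remember (post_quantile pi rho tau Y) as T eqn:TE0 => hT.
set S := [set t : R | (tau%:E <= posterior pi rho Y `]-oo, t])%E].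
have TE : T = inf S by rewrite TE0.
have [hinf|nhinf] := pselect (has_inf S); last first.
  by move: hT; rewrite TE inf_out // normr0 => h; exfalso; lra.
rewrite /W2sq; apply: le_ereal_inf_tmp => x [g [hm ->]].
have mB : measurable (`[(- a)%R, a] : set R) by exact: measurable_itv.
have mBc : measurable (~` `[(- a)%R, a] : set R) by exact: measurableC.
have [u [gu u01]] := @probE g _ (measurableX measurableT mBc).
rewrite (hm _ mBc).2 in gu; rewrite gu lee_fin in hX.
move: hT; rewrite ltr_normr => /orP[hT|hT].
- have T0 : 0 < T by apply: lt_trans hT.
  rewrite gtr0_norm //.
  set b := (a + T) / 2.
  have nSb : ~ S b.
    by move=> Sb; have := ge_inf hinf.2 Sb; rewrite -TE /b; lra.
  have mA : measurable (`]-oo, b] : set R) by exact: measurable_itv.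
  have [s [gs s01]] := @probE g _ (measurableX mA measurableT).
  rewrite (hm _ mA).1 in gs.
  have Fb : s < tau.
    by rewrite -lte_fin -gs ltNge; apply/negP.
  set D := `]b, +oo[ `*` `[(- a)%R, a].
  have mD : measurable D by apply: measurableX => //; exact: measurable_itv.
  have [r [gr r01]] := @probE g _ mD.
  have cov : [set: R * R] `<=` (`]-oo, b] `*` [set: R]) `|` D `|` ([set: R] `*` ~` `[(- a)%R, a]).
    move=> [z1 z2] _ /=.
    case: (leP z1 b) => h1; first by left; left; split => //=; rewrite in_itv.
    have [h2|h2] := boolP (z2 \in `[(- a)%R, a]); last by right; split => //=; apply/negP.
    by left; right; split => //=; rewrite in_itv /= h1.
  have := @cover3 g _ _ _ _ measurableT (measurableX mA measurableT) mD (measurableX measurableT mBc) cov.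
  rewrite probability_setT (hm _ mA).1 (hm _ mBc).2 gs gr gu -!EFinD lee_fin => hcov.
  have hk : forall z, D z -> ((T - a) / 2) ^+ 2 <= (z.1 - z.2) ^+ 2.
    move=> [z1 z2] [] /=; rewrite !in_itv /= andbT => h1 /andP[h2 h3].
    have : (T - a) / 2 <= z1 - z2 by rewrite /b in h1; lra.
    have : 0 <= (T - a) / 2 by lra.
    move=> p q; nra.
  apply: le_trans (@rect_lb g D (((T - a) / 2) ^+ 2) mD (sqr_ge0 _) hk).
  rewrite gr -EFinM lee_fin mulrC ler_wpM2l ?sqr_ge0 //; lra.
- have T0 : T < 0 by lra.
  rewrite ltr0_norm //.
  have [b Sb hb] : exists2 b, S b & b < (T - a) / 2.
    by apply: inf_lt; [exact: hinf.1 | rewrite -TE; lra].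
  have mA : measurable (`]-oo, b] : set R) by exact: measurable_itv.
  have [s [gs s01]] := @probE g _ (measurableX mA measurableT).
  rewrite (hm _ mA).1 in gs.
  have Fb : tau <= s by rewrite -lee_fin -gs; exact: Sb.
  set D := `]-oo, b] `*` `[(- a)%R, a].
  have mD : measurable D by apply: measurableX => //; exact: measurable_itv.
  have [r [gr r01]] := @probE g _ mD.
  have cov : `]-oo, b] `*` [set: R] `<=` D `|` ([set: R] `*` ~` `[(- a)%R, a]) `|` set0.
    move=> [z1 z2] [h1 _] /=.
    have [h2|h2] := boolP (z2 \in `[(- a)%R, a]); last by left; right; split => //=; apply/negP.
    by left; left; split.
  have := @cover3 g _ _ _ _ (measurableX mA measurableT) mD (measurableX measurableT mBc) measurable0 cov.
  rewrite measure0 adde0 (hm _ mA).1 (hm _ mBc).2 gs gr gu -!EFinD lee_fin => hcov.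
  have hk : forall z, D z -> ((- T - a) / 2) ^+ 2 <= (z.1 - z.2) ^+ 2.
    move=> [z1 z2] [] /=; rewrite !in_itv /= => h1 /andP[h2 h3].
    have : (- T - a) / 2 <= z2 - z1 by lra.
    have : 0 <= (- T - a) / 2 by lra.
    move=> p q; nra.
  apply: le_trans (@rect_lb g D (((- T - a) / 2) ^+ 2) mD (sqr_ge0 _) hk).
  rewrite gr -EFinM lee_fin mulrC ler_wpM2l ?sqr_ge0 //; lra.
Qed.

Lemma arith1 (x y z a w : R) : x + a + w < y -> y <= z + x -> a + w < z.
Proof. move=> h1 h2; lra. Qed.

Lemma W2_lb (pi rho : R -> R) n (X Y : 'I_n -> R) (tau a d : R) :
  0 < d -> 2 * d <= tau -> 2 * d <= 1 - tau -> 0 < a ->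
  (posterior pi rho X (~` `[(- a)%R, a]) <= d%:E)%E ->
  a < `|post_quantile pi rho tau Y| ->
  ((Num.sqrt d * ((`|post_quantile pi rho tau Y| - a) / 2))%:E <=
     W2 (posterior pi rho Y) (posterior pi rho X))%E.
Proof.
move=> d0 h1 h2 a0 hX hT.
have := @W2sq_lb pi rho n X Y tau a d d0 h1 h2 a0 hX hT.
rewrite /W2.
set q := (`|post_quantile pi rho tau Y| - a) / 2.
have q0 : 0 <= q by rewrite /q; lra.
case: (W2sq _ _) => [r| |]; [|by move=> _; exact: leey|by rewrite !leeNy_eq].
rewrite !lee_fin => hr.
rewrite -(ger0_norm (mulr_ge0 (sqrtr_ge0 d) q0)) -sqrtr_sqr.
rewrite ler_sqrt //; last by apply: le_trans hr; rewrite mulr_ge0 // ?sqr_ge0 // ltW.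
by rewrite exprMn sqr_sqrtr // ltW.
Qed.
End Aux.

Theorem mainTheorem16 (R : realType) (pi rho : R -> R) (n : nat)
  (X : 'I_n -> R) (tau : R) :
  (0 < n)%N ->
  measurable_fun [set: R] pi ->
  (forall t, 0 <= pi t) ->
  (\int[@lebesgue_measure R]_(t in [set: R]) (pi t)%:E)%E = 1%E ->
  measurable_fun [set: R] rho ->
  (forall Y : 'I_n -> R,
     (0 < post_norm pi rho Y)%E /\ (post_norm pi rho Y < +oo)%E /\
     (\int[@lebesgue_measure R]_(t in [set: R])
         ((t ^+ 2 * post_dens pi rho Y t)%:E) < +oo)%E) ->
  0 < tau < 1 ->
  (post_breakdown pi rho X <= fs_breakdown (post_quantile pi rho tau) X)%E.
Proof.
move=> n0 mpi pi0 pi1 mrho hY /andP[t0 t1].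
have [d [d0 [dt dt']]] : exists d : R, 0 < d /\ 2 * d <= tau /\ 2 * d <= 1 - tau.
  by case: (leP tau (1 - tau)) => h; [exists (tau / 2) | exists ((1 - tau) / 2)]; lra.
have [hn [_ hm]] := hY X.
set M2 := fine (\int[@lebesgue_measure R]_(t in [set: R])
         ((t ^+ 2 * post_dens pi rho X t)%:E)).
have M20 : 0 <= M2.
  apply: fine_ge0; apply: integral_ge0 => x _.
  by rewrite lee_fin mulr_ge0 // ?sqr_ge0 // (@post_dens_ge0 R pi rho n X pi0 hn).
set a := 1 + M2 / d.
have a1 : 1 <= a by rewrite /a lerDl divr_ge0 // ltW.
have a0 : 0 < a by lra.
have da : d * a = d + M2 by rewrite /a mulrDr mulr1 mulrCA mulfV ?gt_eqF // mulr1.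
have hX : (posterior pi rho X (~` `[(- a)%R, a]) <= d%:E)%E.
  apply: le_trans (@tail_bound R pi rho n X a a0 mpi mrho pi0 hn hm) _.
  rewrite -/M2 lee_fin ler_pdivrMr ?exprn_gt0 // expr2 mulrA da.
  apply: (@le_trans _ _ (d + M2)); first lra.
  by apply: ler_peMr => //; lra.
set c := Num.sqrt d / 2.
have c0 : 0 < c by rewrite /c divr_gt0 // sqrtr_gt0.
set Q := post_quantile pi rho tau.
have bound : forall Y, a < `|Q Y| ->
    ((c * (`|Q Y| - a))%:E <= W2 (posterior pi rho Y) (posterior pi rho X))%E.
  move=> Y hQ; apply: le_trans (@W2_lb R pi rho n X Y tau a d d0 dt dt' a0 hX hQ).
  by rewrite lee_fin /c -/Q mulrA mulrAC.
rewrite /post_breakdown /fs_breakdown /breakdown.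
apply: ereal_inf_le_tmp => _ [m hsup <-]; exists m => //=.
have key : forall M : R, exists2 Y, Bset X m Y &
    (M%:E < W2 (posterior pi rho Y) (posterior pi rho X))%E.
  move=> M.
  have : ((`|Q X| + a + (`|M| + 1) / c)%:E <
      ereal_sup [set (`|Q Y - Q X|)%:E | Y in Bset X m])%E.
    by rewrite hsup ltry.
  move=> /ereal_sup_gt [_ [Y BY <-] hYl]; exists Y => //.
  rewrite lte_fin in hYl.
  have hn1 := ler_normB (Q Y) (Q X).
  set w := (`|M| + 1) / c in hYl.
  have cw : c * w = `|M| + 1 by rewrite /w mulrC divfK ?gt_eqF.
  have w0 : 0 < w by rewrite /w divr_gt0 // ltr_pwDr // normr_ge0.
  have hQ' := @arith1 R _ _ _ _ _ hYl hn1.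
  have hQ : a < `|Q Y| by apply: le_lt_trans hQ'; rewrite lerDl ltW.
  apply: lt_le_trans (bound Y hQ).
  rewrite lte_fin.
  have hw : w <= `|Q Y| - a by rewrite lerBrDl ltW.
  apply: le_lt_trans (ler_norm M) _.
  apply: (@lt_le_trans _ _ (`|M| + 1)); first by rewrite ltrDl.
  by rewrite -cw ler_wpM2l // ltW.
case E : (ereal_sup _) => [r| |] //.
- have [Y BY hY'] := key r.
  have : (W2 (posterior pi rho Y) (posterior pi rho X) <= r%:E)%E.
    by rewrite -E; apply: ereal_sup_ubound; exists Y.
  by rewrite leNgt hY'.
- have [Y BY hY'] := key 0.
  have : (W2 (posterior pi rho Y) (posterior pi rho X) <= -oo)%E.
    by rewrite -E; apply: ereal_sup_ubound; exists Y.
  by rewrite leeNy_eq => /eqP h; rewrite h in hY'.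
Qed.
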